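(* Let $X=\{x_j:j\in I\}$ with $I\subseteq\mathbb Z$ an interval of integers and $x_j<x_{j+1}$, and let parties $A,B$ have weak preference orders $\succeq_A,\succeq_B$ on $X$ with unique ideal points $\tau_A,\tau_B$. Then the parties agree on cross-side comparisons, meaning that for all positive integers $a,b$ such that the relevant policies belong to $X$, \[ R_A(a)\succeq_A L_A(b)\iff R_B(a)\succeq_B L_B(b) \quad\text{and}\quad L_A(b)\succeq_A R_A(a)\iff L_B(b)\succeq_B R_B(a), \] provided either of the following holds (where for each party $i$, $v_i:X\to\mathbb R$ is a utility function representing $\succeq_i$, i.e. $x\succeq_i y\iff v_i(x)\ge v_i(y)$): \begin{enumerate} \item[(i)] (Symmetric single-peaked utilities) for each party $i$ there is a strictly decreasing function $\phi_i:\mathbb Z_{\ge0}\to\mathbb R$ such that, if $\tau_i=x_c$, then $v_i(x_m)=\phi_i(|m-c|)$ for all $x_m\in X$; \item[(ii)] (Common utility shape) there is a function $u:\mathbb Z\to\mathbb R$ such that for each party $i$, if $\tau_i=x_c$, then $v_i(x_m)=u(m-c)$ for all $x_m\in X$. \end{enumerate}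
   Context: Ordinal displacement notation: for a party $i$ with ideal point $\tau_i=x_c$ and a positive integer $k$, $R_i(k)=x_{c+k}$ and $L_i(k)=x_{c-k}$, whenever these policies belong to $X$; i.e. $R_i(k)$ and $L_i(k)$ are the policies $k$ ordinal steps to the right and to the left of party $i$'s ideal point. *)

(* Defs.v *)
From Stdlib Require Import Reals ZArith Lia Lra.
Open Scope R_scope.

Definition Z_interval (I : Z -> Prop) : Prop :=
  forall i j k : Z, I i -> I k -> (i <= j <= k)%Z -> I j.

Definition increasing_on (I : Z -> Prop) (x : Z -> R) : Prop :=
  forall j : Z, I j -> I (j + 1)%Z -> x j < x (j + 1)%Z.

Definition inX (I : Z -> Prop) (x : Z -> R) (p : R) : Prop :=
  exists j, I j /\ x j = p.

(* A weak preference order (complete, transitive) on X; pref p q means p >= q. *)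
Definition weak_order_on (I : Z -> Prop) (x : Z -> R) (pref : R -> R -> Prop) : Prop :=
  (forall p q, inX I x p -> inX I x q -> pref p q \/ pref q p) /\
  (forall p q r, inX I x p -> inX I x q -> inX I x r ->
     pref p q -> pref q r -> pref p r).

Definition unique_ideal_point (I : Z -> Prop) (x : Z -> R) (pref : R -> R -> Prop)
  (c : Z) : Prop :=
  I c /\ (forall m, I m -> pref (x c) (x m)) /\
  (forall d, I d -> (forall m, I m -> pref (x d) (x m)) -> x d = x c).

Definition represents (I : Z -> Prop) (x : Z -> R) (pref : R -> R -> Prop)
  (v : R -> R) : Prop :=
  forall p q, inX I x p -> inX I x q -> (pref p q <-> v p >= v q).

(* Ordinal displacements: R_i(k) = x_{c+k}, L_i(k) = x_{c-k}. *)
Definition Rdisp (x : Z -> R) (c k : Z) : R := x (c + k)%Z.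
Definition Ldisp (x : Z -> R) (c k : Z) : R := x (c - k)%Z.

Definition strictly_decreasing_nat (phi : nat -> R) : Prop :=
  forall n m : nat, (n < m)%nat -> phi m < phi n.

Definition cond_symmetric (I : Z -> Prop) (x : Z -> R)
  (prefA prefB : R -> R -> Prop) (cA cB : Z) : Prop :=
  exists (vA vB : R -> R) (phiA phiB : nat -> R),
    represents I x prefA vA /\ represents I x prefB vB /\
    strictly_decreasing_nat phiA /\ strictly_decreasing_nat phiB /\
    (forall m, I m -> vA (x m) = phiA (Z.abs_nat (m - cA))) /\
    (forall m, I m -> vB (x m) = phiB (Z.abs_nat (m - cB))).

Definition cond_common_shape (I : Z -> Prop) (x : Z -> R)
  (prefA prefB : R -> R -> Prop) (cA cB : Z) : Prop :=
  exists (vA vB : R -> R) (u : Z -> R),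
    represents I x prefA vA /\ represents I x prefB vB /\
    (forall m, I m -> vA (x m) = u (m - cA)%Z) /\
    (forall m, I m -> vB (x m) = u (m - cB)%Z).

(* Main.v *)
Require Import Defs.
From Stdlib Require Import Reals ZArith.
Open Scope R_scope.

From Stdlib Require Import Lia Lra.

Lemma sd_ge (phi : nat -> R) (n m : nat) :
  strictly_decreasing_nat phi -> (phi n >= phi m <-> (n <= m)%nat).
Proof.
  intros H; split; intros H1.
  - destruct (le_lt_dec n m) as [h|h]; auto. apply H in h. lra.
  - destruct (Nat.eq_dec n m) as [->|ne]; [lra|].
    assert (h : (n < m)%nat) by lia. apply H in h. lra.
Qed.

Theorem proposition3 (I : Z -> Prop) (x : Z -> R)
  (prefA prefB : R -> R -> Prop) (cA cB : Z) :
  Z_interval I ->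
  increasing_on I x ->
  weak_order_on I x prefA ->
  weak_order_on I x prefB ->
  unique_ideal_point I x prefA cA ->
  unique_ideal_point I x prefB cB ->
  (cond_symmetric I x prefA prefB cA cB \/ cond_common_shape I x prefA prefB cA cB) ->
  forall a b : Z, (0 < a)%Z -> (0 < b)%Z ->
    I (cA + a)%Z -> I (cA - b)%Z -> I (cB + a)%Z -> I (cB - b)%Z ->
    (prefA (Rdisp x cA a) (Ldisp x cA b) <-> prefB (Rdisp x cB a) (Ldisp x cB b)) /\
    (prefA (Ldisp x cA b) (Rdisp x cA a) <-> prefB (Ldisp x cB b) (Rdisp x cB a)).
Proof.
  intros _ _ _ _ [IA _] [IB _] H a b Ha Hb H1 H2 H3 H4.
  unfold Rdisp, Ldisp.
  assert (XA1 : inX I x (x (cA + a)%Z)) by (exists (cA+a)%Z; auto).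
  assert (XA2 : inX I x (x (cA - b)%Z)) by (exists (cA-b)%Z; auto).
  assert (XB1 : inX I x (x (cB + a)%Z)) by (exists (cB+a)%Z; auto).
  assert (XB2 : inX I x (x (cB - b)%Z)) by (exists (cB-b)%Z; auto).
  destruct H as [[vA [vB [pA [pB [RA [RB [DA [DB [EA EB]]]]]]]]]|[vA [vB [u [RA [RB [EA EB]]]]]]].
  - rewrite (RA _ _ XA1 XA2), (RB _ _ XB1 XB2), (RA _ _ XA2 XA1), (RB _ _ XB2 XB1).
    rewrite (EA _ H1), (EA _ H2), (EB _ H3), (EB _ H4).
    replace (cA + a - cA)%Z with a by lia. replace (cA - b - cA)%Z with (-b)%Z by lia.
    replace (cB + a - cB)%Z with a by lia. replace (cB - b - cB)%Z with (-b)%Z by lia.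
    rewrite !sd_ge by assumption. tauto.
  - rewrite (RA _ _ XA1 XA2), (RB _ _ XB1 XB2), (RA _ _ XA2 XA1), (RB _ _ XB2 XB1).
    rewrite (EA _ H1), (EA _ H2), (EB _ H3), (EB _ H4).
    replace (cA + a - cA)%Z with a by lia. replace (cA - b - cA)%Z with (-b)%Z by lia.
    replace (cB + a - cB)%Z with a by lia. replace (cB - b - cB)%Z with (-b)%Z by lia.
    tauto.
Qed.
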